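(* Consider the binary delegated search model described in the context, with the additional constraint that at most $n$ options (where $n<m$) can be examined for feasibility. There exists a mechanism for the principal such that, when the agent (subject to the same limit of examining at most $n$ options) best-responds to it, the principal's expected net value is at least $\frac12\left(1-\frac1e\right)$ times the expected net value of the optimal search procedure that the principal could run herself subject to the same limit of examining at most $n$ options. Here the principal's net value in delegation is her value of the accepted proposal minus the total examination cost incurred by the agent.
   Context: Binary model: there are $m$ options $\omega_1,\ldots,\omega_m$. Option $\omega_i$ is feasible with probability $p_i>0$, independently of the other options. If feasible it yields the commonly known utility $x_i\ge 0$ to the principal and $y_i$ to the agent; if infeasible it yields $0$ to both. Determining whether $\omega_i$ is feasible requires paying a known cost $c_i\ge 0$, and it is assumed that $c_i\le p_i y_i$ for every $i$. In delegated search the agent adaptively chooses options to examine, paying their costs, and proposes one option. The principal, using a mechanism, either accepts it (receiving the $x$-value of the option if it is feasible) or rejects it (status quo, value $0$). The agent maximizes the expected $y$-value of the accepted proposal minus his examination costs. A search procedure for the principal herself adaptively examines options (paying costs), stops at any time, and selects at most one examined feasible option. Its net value is the $x$-value of the selected option minus the total examination costs. *)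

(* Defs.v *)
From HB Require Import structures.
From mathcomp Require Import all_boot all_order all_algebra.
From mathcomp Require Import reals sequences.
Set Implicit Arguments. Unset Strict Implicit. Unset Printing Implicit Defensive.
Import Order.TTheory GRing.Theory Num.Theory.
Local Open Scope ring_scope.

(* An adaptive search procedure over the options 'I_m, as a decision tree:
   - [Stop None]      : stop, select nothing;
   - [Stop (Some i)]  : stop, select (propose) option i;
   - [Exam i tF tI]   : pay c_i to examine option i, continue with tF if it is
                        feasible and with tI if it is infeasible. *)
Inductive proc (m : nat) : Type :=
| Stop of option 'I_m
| Exam of 'I_m & proc m & proc m.

Arguments Stop {m}.
Arguments Exam {m}.

Fixpoint valid_from (m : nat) (E : seq ('I_m * bool)) (k : nat) (t : proc m)
  : bool :=
  match t with
  | Stop None => true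
  | Stop (Some i) => (i, true) \in E
  | Exam i tF tI =>
      [&& (0 < k)%N, i \notin map fst E,
          valid_from ((i, true) :: E) k.-1 tF
        & valid_from ((i, false) :: E) k.-1 tI]
  end.

Definition valid_proc (m n : nat) (t : proc m) : bool := valid_from [::] n t.

(* Expected net value of procedure t when selecting (a feasible) option i
   yields reward r i; option i is feasible with probability p i independently
   of the others, and examining it costs c i. *)
Fixpoint exp_value (R : realType) (m : nat) (p c r : 'I_m -> R) (t : proc m)
  : R :=
  match t with
  | Stop None => 0
  | Stop (Some i) => r i
  | Exam i tF tI =>
      - c i + p i * exp_value p c r tF + (1 - p i) * exp_value p c r tI
  end.

(* A mechanism accepts a proposed option i with probability q i (q i in {0,1}
   for a deterministic acceptance set).  The agent's expected utility of a
   search-and-propose strategy t: *)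
Definition agent_utility (R : realType) (m : nat) (p c y q : 'I_m -> R)
  (t : proc m) : R := exp_value p c (fun i => q i * y i) t.

Definition principal_delegated (R : realType) (m : nat) (p c x q : 'I_m -> R)
  (t : proc m) : R := exp_value p c (fun i => q i * x i) t.

Definition principal_own (R : realType) (m : nat) (p c x : 'I_m -> R)
  (t : proc m) : R := exp_value p c x t.

Definition best_response (R : realType) (m n : nat) (p c y q : 'I_m -> R)
  (t : proc m) : Prop :=
  valid_proc n t /\
  forall t' : proc m, valid_proc n t' ->
    agent_utility p c y q t' <= agent_utility p c y q t.

(* Main.v *)
From HB Require Import structures.
From mathcomp Require Import all_boot all_order all_algebra.
From mathcomp Require Import reals sequences.
From mathcomp Require Import ring lra.
Require Import Defs.
Import Order.TTheory GRing.Theory Num.Theory.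
Set Implicit Arguments. Unset Strict Implicit. Unset Printing Implicit Defensive.
Local Open Scope ring_scope.
Definition maxsum (R : realType) (m : nat) (a : 'I_m -> R) (U : {set 'I_m}) (k : nat) : R :=
  \big[Num.max/0]_(A : {set 'I_m} | (A \subset U) && (#|A| <= k)%N) \sum_(i in A) a i.

Lemma maxsum_ge (R : realType) (m : nat) (a : 'I_m -> R) (U : {set 'I_m}) k (A : {set 'I_m}) :
  A \subset U -> (#|A| <= k)%N -> \sum_(i in A) a i <= maxsum a U k.
Proof.
move=> AU Ak; rewrite /maxsum (bigD1 A) /=; last by rewrite AU Ak.
by rewrite le_max lexx.
Qed.

Lemma maxsum_ge0 (R : realType) (m : nat) (a : 'I_m -> R) (U : {set 'I_m}) k : 0 <= maxsum a U k.
Proof.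
have := @maxsum_ge R m a U k set0 (sub0set U).
by rewrite cards0 big_set0 => ->.
Qed.

Lemma maxsum_arg (R : realType) (m : nat) (a : 'I_m -> R) (U : {set 'I_m}) k :
  exists A : {set 'I_m}, [/\ A \subset U, (#|A| <= k)%N & maxsum a U k = \sum_(i in A) a i].
Proof.
rewrite /maxsum.
apply: (big_ind (fun v => exists A : {set 'I_m}, [/\ A \subset U, (#|A| <= k)%N & v = \sum_(i in A) a i])).
- by exists set0; rewrite sub0set cards0 big_set0.
- move=> u v [A [h1 h2 ->]] [B [h3 h4 ->]].
  case: (leP (\sum_(i in A) a i) (\sum_(i in B) a i)) => _.
  + by exists B.
  + by exists A.
- by move=> A /andP[h1 h2]; exists A.
Qed.

Lemma maxsum_step (R : realType) (m : nat) (a : 'I_m -> R) (U : {set 'I_m}) k i :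
  i \in U -> a i + maxsum a (U :\ i) k <= maxsum a U k.+1.
Proof.
move=> iU; have [A [AU Ak ->]] := maxsum_arg a (U :\ i) k.
have iA : i \notin A.
  by apply/negP => /(subsetP AU); rewrite !inE eqxx.
rewrite -big_setU1 //=; apply: maxsum_ge.
  apply/subsetP => j; rewrite !inE => /orP[/eqP -> //|/(subsetP AU)].
  by rewrite !inE => /andP[].
by rewrite cardsU1 iA add1n ltnS.
Qed.
Definition aT (R : realType) (m : nat) (p x c : 'I_m -> R) (T : R) (i : 'I_m) : R :=
  p i * Num.max (x i - c i / p i - T) 0.

Definition Bf (R : realType) (m : nat) (x : 'I_m -> R) (T : R) (E : seq ('I_m * bool)) : R :=
  foldr (fun e acc => if e.2 then Num.max (x e.1) acc else acc) T E.

Definition Uf (m : nat) (E : seq ('I_m * bool)) : {set 'I_m} := [set j | j \notin map fst E].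

Lemma Bf_geT (R : realType) (m : nat) (x : 'I_m -> R) T E : T <= Bf x T E.
Proof.
elim: E => [|[j b] E IH] /=; first by [].
by case: b => //; rewrite le_max IH orbT.
Qed.

Lemma Bf_mem (R : realType) (m : nat) (x : 'I_m -> R) T E i :
  (i, true) \in E -> x i <= Bf x T E.
Proof.
elim: E => [|[j b] E IH] //=; rewrite inE => /orP[/eqP [<- <-]|/IH h].
  by rewrite le_max lexx.
by case: b => //; rewrite le_max h orbT.
Qed.

Lemma Uf_cons (m : nat) (E : seq ('I_m * bool)) i b : Uf ((i, b) :: E) = Uf E :\ i.
Proof. by apply/setP => j; rewrite !inE negb_or andbC. Qed.

Lemma key_ineq (R : realType) (pi xi ci B T : R) :
  0 < pi -> 0 <= ci -> T <= B ->
  pi * (Num.max xi B - B) - ci <= pi * Num.max (xi - ci / pi - T) 0.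
Proof.
move=> p0 c0 TB.
have pc : pi * (ci / pi) = ci by rewrite mulrC divfK // gt_eqF.
have h1 : Num.max xi B - B <= Num.max (xi - T) 0.
  case: (leP xi B) => h.
    by rewrite subrr le_max lexx orbT.
  by rewrite le_max lerB // lexx.
apply: (le_trans (y := pi * Num.max (xi - T) 0 - ci)).
  by rewrite lerD2r; apply: ler_wpM2l => //; exact: ltW.
case: (leP (xi - T) 0) => h.
  rewrite mulr0 sub0r; apply: (le_trans (y := 0)); first by rewrite lerNl oppr0.
  by apply: mulr_ge0; [exact: ltW | rewrite le_max lexx orbT].
apply: (le_trans (y := pi * (xi - ci / pi - T))).
  by rewrite !mulrBr pc; lra.
by apply: ler_wpM2l; [exact: ltW | rewrite le_max lexx].
Qed.

Lemma own_bound (R : realType) (m : nat) (p x c : 'I_m -> R) (T : R) :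
  (forall i, 0 < p i /\ p i <= 1) -> (forall i, 0 <= c i) -> 0 <= T ->
  forall t E k, valid_from E k t ->
  exp_value p c x t <= Bf x T E + maxsum (aT p x c T) (Uf E) k.
Proof.
move=> hp hc T0.
elim=> [[i|]|i tF IHF tI IHI] E k /=.
- move=> iE; apply: (le_trans (Bf_mem x T iE)).
  by rewrite lerDl maxsum_ge0.
- move=> _; apply: addr_ge0; last exact: maxsum_ge0.
  exact: (le_trans T0 (Bf_geT x T E)).
- case/and4P=> k0 iE vF vI.
  case: k k0 vF vI => [//|k] _ vF vI.
  have := IHF _ _ vF; have := IHI _ _ vI.
  rewrite /= !Uf_cons => hI hF.
  have iU : i \in Uf E by rewrite inE.
  have hs := maxsum_step (aT p x c T) k iU.
  have hk := key_ineq (x i) (hp i).1 (hc i) (Bf_geT x T E).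
  have [p0 p1] := hp i.
  set M' := maxsum _ _ k in hF hI hs.
  set M := maxsum _ _ k.+1 in hs *.
  set B := Bf x T E in hF hI hk *.
  set oF := exp_value _ _ _ tF in hF *.
  set oI := exp_value _ _ _ tI in hI *.
  have h1 : p i * oF <= p i * (Num.max (x i) B + M') by apply: ler_wpM2l; [exact: ltW|].
  have h2 : (1 - p i) * oI <= (1 - p i) * (B + M') by apply: ler_wpM2l; [rewrite subr_ge0|].
  rewrite /aT in hs hk.
  set mx := Num.max (x i) B in h1 hk.
  set ai := p i * _ in hs hk.
  have e1 : p i * (mx + M') + (1 - p i) * (B + M') = p i * (mx - B) + B + M' by ring.
  lra.
Qed.
Fixpoint G (R : realType) (m : nat) (p sg : 'I_m -> R) (L : R) (l : seq 'I_m) : R :=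
  match l with
  | [::] => L
  | j :: l' => p j * G p sg (Num.max L (sg j)) l' + (1 - p j) * G p sg L l'
  end.

Lemma G_ge (R : realType) (m : nat) (p sg : 'I_m -> R) :
  (forall i, 0 < p i /\ p i <= 1) -> forall l L, L <= G p sg L l.
Proof.
move=> hp; elim=> [|j l IH] L //=.
have [p0 p1] := hp j.
have h1 : p j * L <= p j * G p sg (Num.max L (sg j)) l.
  apply: ler_wpM2l; first exact: ltW.
  by apply: le_trans (IH _); rewrite le_max lexx.
have h2 : (1 - p j) * L <= (1 - p j) * G p sg L l.
  by apply: ler_wpM2l; [rewrite subr_ge0 | exact: IH].
lra.
Qed.

Lemma G_lip (R : realType) (m : nat) (p sg : 'I_m -> R) :
  (forall i, 0 < p i /\ p i <= 1) -> forall l L L', L <= L' ->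
  G p sg L' l - G p sg L l <= L' - L.
Proof.
move=> hp; elim=> [|j l IH] L L' LL' //=.
have [p0 p1] := hp j.
have m1 : Num.max L (sg j) <= Num.max L' (sg j).
  by rewrite ge_max !le_max LL' lexx !orbT.
have m2 : Num.max L' (sg j) - Num.max L (sg j) <= L' - L.
  have hL : L <= Num.max L (sg j) by rewrite le_max lexx.
  have hs : sg j <= Num.max L (sg j) by rewrite le_max lexx orbT.
  rewrite lerBlDr ge_max; apply/andP; split; lra.
have h1 := IH _ _ m1; have h2 := IH _ _ LL'.
have e : p j * G p sg (Num.max L' (sg j)) l + (1 - p j) * G p sg L' l -
   (p j * G p sg (Num.max L (sg j)) l + (1 - p j) * G p sg L l) =
   p j * (G p sg (Num.max L' (sg j)) l - G p sg (Num.max L (sg j)) l) +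
   (1 - p j) * (G p sg L' l - G p sg L l) by ring.
rewrite e.
have h3 : p j * (G p sg (Num.max L' (sg j)) l - G p sg (Num.max L (sg j)) l) <= p j * (L' - L).
  apply: ler_wpM2l; first exact: ltW.
  exact: le_trans h1 m2.
have h4 : (1 - p j) * (G p sg L' l - G p sg L l) <= (1 - p j) * (L' - L).
  by apply: ler_wpM2l; [rewrite subr_ge0 | exact: h2].
lra.
Qed.
Lemma G_split (R : realType) (m : nat) (p sg : 'I_m -> R) i l2 :
  forall l1 K, G p sg K (l1 ++ i :: l2) =
  p i * G p sg (Num.max K (sg i)) (l1 ++ l2) + (1 - p i) * G p sg K (l1 ++ l2).
Proof.
elim=> [|j l1 IH] K //=.
rewrite !IH.
have -> : Num.max (Num.max K (sg j)) (sg i) = Num.max (Num.max K (sg i)) (sg j).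
  by rewrite -!maxA (maxC (sg j)).
ring.
Qed.

Lemma G_const (R : realType) (m : nat) (p sg : 'I_m -> R) :
  forall l L, (forall j, j \in l -> sg j <= L) -> G p sg L l = L.
Proof.
elim=> [|j l IH] L h //=.
have -> : Num.max L (sg j) = L by apply/max_idPl; apply: h; rewrite inE eqxx.
rewrite IH; first ring.
by move=> k kl; apply: h; rewrite inE kl orbT.
Qed.

Lemma filter_split (m : nat) (F : seq 'I_m) i : forall s : seq 'I_m,
  uniq s -> i \in s -> i \notin F ->
  exists l1 l2, [seq j <- s | j \notin F] = l1 ++ i :: l2 /\
                [seq j <- s | j \notin i :: F] = l1 ++ l2.
Proof.
elim=> [|j s IH] //= /andP[js us]; rewrite inE => /orP[/eqP ij|iS] iF.
  subst j; exists [::], [seq j <- s | j \notin F]; rewrite /= iF inE eqxx /=; split=> //.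
  apply: eq_in_filter => k ks; rewrite inE; case: eqP => // ki; subst k.
  by rewrite ks in js.
have [l1 [l2 [e1 e2]]] := IH us iS iF.
have ji : j != i by apply/eqP => ji; subst j; rewrite iS in js.
case jF: (j \in F).
  exists l1, l2; rewrite /= inE jF orbT /= e1 e2; split=> //.
exists (j :: l1), l2; rewrite /= inE jF (negbTE ji) /= e1 e2; split=> //.
Qed.
Lemma agent_bound (R : realType) (m : nat) (p c y r : 'I_m -> R) (s : seq 'I_m) :
  (forall i, 0 < p i /\ p i <= 1) -> (forall i, 0 <= c i) -> uniq s ->
  (forall i, i \in s -> r i = y i) -> (forall i, i \notin s -> r i = 0) ->
  forall t E k, valid_from E k t ->
  exp_value p c r t <= G p (fun i => y i - c i / p i) (Bf r 0 E) [seq j <- s | j \notin map fst E].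
Proof.
move=> hp hc us rin rout.
set sg := fun i => y i - c i / p i.
have K0 : forall E, 0 <= Bf r 0 E by move=> E; apply: Bf_geT.
elim=> [[i|]|i tF IHF tI IHI] E k /=.
- move=> iE; apply: (le_trans (Bf_mem r 0 iE)); exact: G_ge.
- by move=> _; apply: (le_trans (K0 E)); apply: G_ge.
- case/and4P=> k0 iE vF vI.
  have hF := IHF _ _ vF; have hI := IHI _ _ vI.
  rewrite /= in hF hI.
  set K := Bf r 0 E in hF hI *.
  have [p0 p1] := hp i.
  case iS: (i \in s).
  + have [l1 [l2 [e1 e2]]] := filter_split us iS iE.
    rewrite e1 G_split; rewrite e2 in hF hI.
    rewrite rin // in hF.
    have sy : sg i <= y i.
      rewrite /sg lerBlDr lerDl; apply: divr_ge0; [exact: hc | exact: ltW].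
    have mm : Num.max K (sg i) <= Num.max (y i) K.
      by rewrite ge_max !le_max lexx sy !orbT.
    have hl := G_lip sg hp (l1 ++ l2) mm.
    have m2 : Num.max (y i) K - Num.max K (sg i) <= y i - sg i.
      have hL : K <= Num.max K (sg i) by rewrite le_max lexx.
      have hs : sg i <= Num.max K (sg i) by rewrite le_max lexx orbT.
      rewrite lerBlDr ge_max; apply/andP; split; lra.
    have pc : p i * (y i - sg i) = c i.
      by rewrite /sg opprB addrC subrK mulrC divfK // gt_eqF.
    set GF := G p sg (Num.max (y i) K) (l1 ++ l2) in hF hl.
    set GS := G p sg (Num.max K (sg i)) (l1 ++ l2) in hl *.
    set GI := G p sg K (l1 ++ l2) in hI *.
    have h1 : p i * (exp_value p c r tF) <= p i * GS + c i.
      rewrite -pc -mulrDr; apply: ler_wpM2l; [exact: ltW | lra].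
    have h2 : (1 - p i) * exp_value p c r tI <= (1 - p i) * GI.
      by apply: ler_wpM2l; [rewrite subr_ge0 |].
    lra.
  + have ri : r i = 0 by apply: rout; rewrite iS.
    rewrite ri in hF.
    have e0 : Num.max 0 K = K by apply/max_idPr; exact: K0.
    rewrite e0 in hF.
    have ef : [seq j <- s | j \notin i :: map fst E] = [seq j <- s | j \notin map fst E].
      apply: eq_in_filter => j js; rewrite inE negb_or.
      by case: eqP => // ji; subst j; rewrite js in iS.
    rewrite ef in hF hI.
    set GI := G _ _ K _ in hF hI *.
    have h1 : p i * (exp_value p c r tF) <= p i * GI.
      by apply: ler_wpM2l; [exact: ltW|].
    have h2 : (1 - p i) * exp_value p c r tI <= (1 - p i) * GI.
      by apply: ler_wpM2l; [rewrite subr_ge0 |].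
    have := hc i; lra.
Qed.
Fixpoint build (m : nat) (l : seq 'I_m) : proc m :=
  match l with
  | [::] => Stop None
  | j :: l' => Exam j (Stop (Some j)) (build l')
  end.

Lemma build_valid (m : nat) : forall (l : seq 'I_m) E k, uniq l ->
  (forall j, j \in l -> j \notin map fst E) -> (size l <= k)%N ->
  valid_from E k (build l).
Proof.
elim=> [|j l IH] E k //= /andP[jl ul] hE sk.
case: k sk => [//|k] sk /=.
rewrite hE ?inE ?eqxx //=.
apply: IH => // j' j'l; rewrite /= inE negb_or hE ?inE ?j'l ?orbT // andbT.
by apply/eqP => e; subst j'; rewrite j'l in jl.
Qed.

Lemma build_value (R : realType) (m : nat) (p c y r : 'I_m -> R) :
  (forall i, 0 < p i /\ p i <= 1) ->
  forall l : seq 'I_m, (forall j, j \in l -> r j = y j) ->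
  sorted (fun i j => y j - c j / p j <= y i - c i / p i) l ->
  (forall j, j \in l -> 0 <= y j - c j / p j) ->
  exp_value p c r (build l) = G p (fun i => y i - c i / p i) 0 l.
Proof.
move=> hp; elim=> [|j l IH] hr hs h0 //=.
have [p0 p1] := hp j.
have tr : transitive (fun i j : 'I_m => y j - c j / p j <= y i - c i / p i).
  by move=> a b d h1 h2; apply: le_trans h2 h1.
have hall := order_path_min tr hs.
rewrite IH; first last.
- by move=> k kl; apply: h0; rewrite inE kl orbT.
- exact: path_sorted hs.
- by move=> k kl; apply: hr; rewrite inE kl orbT.
have -> : Num.max 0 (y j - c j / p j) = y j - c j / p j.
  by apply/max_idPr; apply: h0; rewrite mem_head.
have hG : G p (fun i => y i - c i / p i) (y j - c j / p j) l = y j - c j / p j.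
  by apply: G_const => k kl; exact: (allP hall k kl).
rewrite hG.
rewrite hr ?mem_head //.
have pc : p j * (c j / p j) = c j by rewrite mulrC divfK // gt_eqF.
rewrite mulrBr pc; ring.
Qed.

Lemma deleg_value (R : realType) (m : nat) (p c x r : 'I_m -> R) (T : R) :
  (forall i, 0 < p i /\ p i <= 1) ->
  forall l : seq 'I_m, (forall j, j \in l -> r j = x j) ->
  (forall j, j \in l -> T <= x j - c j / p j) ->
  [/\ 0 <= \prod_(j <- l) (1 - p j), \prod_(j <- l) (1 - p j) <= 1 &
  T * (1 - \prod_(j <- l) (1 - p j)) +
    \prod_(j <- l) (1 - p j) * \sum_(j <- l) p j * (x j - c j / p j - T)
  <= exp_value p c r (build l)].
Proof.
move=> hp; elim=> [|j l IH] hr hT /=.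
  by rewrite !big_nil; split => //; rewrite subrr mulr0 mul1r add0r.
have [p0 p1] := hp j.
have hr' : forall k, k \in l -> r k = x k by move=> k kl; apply: hr; rewrite inE kl orbT.
have hT' : forall k, k \in l -> T <= x k - c k / p k by move=> k kl; apply: hT; rewrite inE kl orbT.
have [Q0 Q1 hD] := IH hr' hT'.
rewrite !big_cons.
set Q := \prod_(j <- l) _ in Q0 Q1 hD *.
set S := \sum_(j <- l) _ in hD *.
set D := exp_value _ _ _ (build l) in hD *.
have q0 : 0 <= 1 - p j by rewrite subr_ge0.
split.
- exact: mulr_ge0.
- have : (1 - p j) * Q <= 1 * Q by apply: ler_wpM2r => //; lra.
  lra.
have pc : p j * (c j / p j) = c j by rewrite mulrC divfK // gt_eqF.
set d := x j - c j / p j - T.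
have d0 : 0 <= d by rewrite /d subr_ge0 hT // mem_head.
have e1 : - c j + p j * r j = p j * (T + d).
  rewrite hr ?mem_head // /d.
  have -> : T + (x j - c j / p j - T) = x j - c j / p j by ring.
  by rewrite mulrBr pc; ring.
have h1 : (1 - p j) * (T * (1 - Q) + Q * S) <= (1 - p j) * D by apply: ler_wpM2l.
have h2 : 0 <= p j * d * (1 - (1 - p j) * Q).
  apply: mulr_ge0; first by apply: mulr_ge0 => //; exact: ltW.
  have : (1 - p j) * Q <= 1 * Q by apply: ler_wpM2r => //; lra.
  rewrite subr_ge0; lra.
have e2 : p j * (T + d) + (1 - p j) * (T * (1 - Q) + Q * S) -
  (T * (1 - (1 - p j) * Q) + (1 - p j) * Q * (p j * d + S)) =
  p j * d * (1 - (1 - p j) * Q) by ring.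
rewrite e1 -/d.
lra.
Qed.
Lemma aT_lip (R : realType) (m : nat) (p x c : 'I_m -> R) a b i :
  (forall i, 0 < p i /\ p i <= 1) ->
  aT p x c a i <= aT p x c b i + `|a - b|.
Proof.
move=> hp; have [p0 p1] := hp i; rewrite /aT.
set z := x i - c i / p i.
have h : Num.max (z - a) 0 <= Num.max (z - b) 0 + `|a - b|.
  have n0 : 0 <= `|a - b| := normr_ge0 _.
  have hm1 : z - b <= Num.max (z - b) 0 by rewrite le_max lexx.
  have hm2 : 0 <= Num.max (z - b) 0 by rewrite le_max lexx orbT.
  have hn : b - a <= `|a - b| by rewrite distrC ler_norm.
  rewrite ge_max; apply/andP; split; lra.
have h2 : p i * Num.max (z - a) 0 <= p i * (Num.max (z - b) 0 + `|a - b|).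
  by apply: ler_wpM2l => //; exact: ltW.
have h3 : p i * `|a - b| <= `|a - b|.
  have : p i * `|a - b| <= 1 * `|a - b|.
    by rewrite ler_wpM2r // normr_ge0.
  by rewrite mul1r.
rewrite mulrDr in h2; lra.
Qed.

Lemma S_lip1 (R : realType) (m n : nat) (p x c : 'I_m -> R) a b :
  (forall i, 0 < p i /\ p i <= 1) ->
  maxsum (aT p x c a) setT n <= maxsum (aT p x c b) setT n + m%:R * `|a - b|.
Proof.
move=> hp; have [A [AU An ->]] := maxsum_arg (aT p x c a) setT n.
apply: (le_trans (y := \sum_(i in A) (aT p x c b i + `|a - b|))).
  by apply: ler_sum => i _; apply: aT_lip.
rewrite big_split /= sumr_const.
apply: lerD; first exact: maxsum_ge.
rewrite -(mulr_natl _ #|A|); apply: ler_wpM2r; first exact: normr_ge0.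
by rewrite ler_nat; apply: leq_trans (max_card _) _; rewrite card_ord.
Qed.

Lemma S_lip (R : realType) (m n : nat) (p x c : 'I_m -> R) a b :
  (forall i, 0 < p i /\ p i <= 1) ->
  `|maxsum (aT p x c a) setT n - maxsum (aT p x c b) setT n| <= m%:R * `|a - b|.
Proof.
move=> hp; have h1 := S_lip1 n x c a b hp; have h2 := S_lip1 n x c b a hp.
rewrite distrC in h2.
rewrite ler_norml; apply/andP; split; lra.
Qed.

Lemma S_mono (R : realType) (m n : nat) (p x c : 'I_m -> R) a b :
  (forall i, 0 < p i /\ p i <= 1) -> a <= b ->
  maxsum (aT p x c b) setT n <= maxsum (aT p x c a) setT n.
Proof.
move=> hp ab; have [A [AU An ->]] := maxsum_arg (aT p x c b) setT n.
apply: le_trans (maxsum_ge _ AU An).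
apply: ler_sum => i _; rewrite /aT; apply: ler_wpM2l; first exact: ltW (hp i).1.
rewrite ge_max !le_max lexx !orbT andbT; apply/orP; left; lra.
Qed.
Lemma main_core (R : realType) (m n : nat) (p x y c : 'I_m -> R) (k T : R) :
  (forall i, 0 < p i /\ p i <= 1) ->
  (forall i, 0 <= x i) ->
  (forall i, 0 <= c i /\ c i <= p i * y i) ->
  0 <= k -> k * 2 <= 1 -> 0 <= T -> maxsum (aT p x c T) setT n = T ->
  exists q : 'I_m -> R,
    (forall i, 0 <= q i <= 1) /\
    exists sigma : proc m,
      best_response n p c y q sigma /\
      forall tau : proc m, valid_proc n tau ->
        k * principal_own p c x tau <= principal_delegated p c x q sigma.
Proof.
move=> hp hx hcy k0 k1 T0 hT.
have hc : forall i, 0 <= c i by move=> i; exact: (hcy i).1.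
have [A [_ An hA]] := maxsum_arg (aT p x c T) setT n.
set A2 := [set i in A | T <= x i - c i / p i].
set sg := fun i => y i - c i / p i.
set s := sort (fun i j => sg j <= sg i) (enum A2).
have memS : forall i, (i \in s) = (i \in A2) by move=> i; rewrite mem_sort mem_enum.
have us : uniq s by rewrite sort_uniq enum_uniq.
have sz : (size s <= n)%N.
  rewrite size_sort -cardE; apply: leq_trans An.
  by apply: subset_leq_card; apply/subsetP => i; rewrite inE => /andP[].
exists (fun i => (i \in A2)%:R); split.
  by move=> i; case: (i \in A2); rewrite ?lexx ?ler01.
exists (build s).
have vs : valid_proc n (build s) by apply: build_valid.
split.
  split => // t' vt'.
  rewrite /agent_utility.
  have hb := agent_bound (y := y) (r := fun i => (i \in A2)%:R * y i) hp hc us _ _ vt'.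
  rewrite /= in hb.
  have ef : [seq j <- s | true] = s by apply/all_filterP/allP.
  have e1 : forall i, i \in s -> (i \in A2)%:R * y i = y i.
    by move=> i; rewrite memS => ->; rewrite mul1r.
  have e2 : forall i, i \notin s -> (i \in A2)%:R * y i = 0.
    by move=> i; rewrite memS => /negbTE ->; rewrite mul0r.
  rewrite ef in hb; apply: le_trans (hb e1 e2) _.
  rewrite (build_value hp e1) //.
  - apply: sort_sorted => a b; exact: le_total.
  - move=> j js; rewrite subr_ge0 ler_pdivrMr; first by rewrite mulrC; exact: (hcy j).2.
    exact: (hp j).1.
move=> tau vtau.
have hown := own_bound x hp hc T0 vtau.
have eU : Uf [::] = [set: 'I_m] by apply/setP => j; rewrite !inE.
rewrite /= eU hT in hown.
have e1 : forall j, j \in s -> (j \in A2)%:R * x j = x j.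
  by move=> j; rewrite memS => ->; rewrite mul1r.
have e3 : forall j, j \in s -> T <= x j - c j / p j.
  by move=> j; rewrite memS inE => /andP[].
have [Q0 Q1 hD] := deleg_value hp e1 e3.
have eS : \sum_(j <- s) p j * (x j - c j / p j - T) = T.
  suff -> : \sum_(j <- s) p j * (x j - c j / p j - T) = \sum_(i in A) aT p x c T i.
    by rewrite -hA hT.
  rewrite (perm_big _ (permEl (perm_sort _ _))) big_enum /=.
  rewrite [in RHS](bigID (fun i => T <= x i - c i / p i)) /=.
  have -> : \sum_(i in A | ~~ (T <= x i - c i / p i)) aT p x c T i = 0.
    apply: big1 => i /andP[_ hi]; rewrite /aT.
    have -> : Num.max (x i - c i / p i - T) 0 = 0.
      by apply/max_idPr; rewrite subr_le0; rewrite real_leNgt ?num_real // negbK in hi; exact: ltW.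
    by rewrite mulr0.
  rewrite addr0; apply: eq_big => i; first by rewrite inE.
  rewrite inE => /andP[_ hi]; rewrite /aT.
  have hm : Num.max (x i - c i / p i - T) 0 = x i - c i / p i - T.
    apply/max_idPl; rewrite subr_ge0; exact: hi.
  by rewrite hm.
rewrite eS in hD.
rewrite /principal_delegated /principal_own.
apply: (le_trans (y := k * (T + T))); first by apply: ler_wpM2l.
apply: le_trans hD.
have : k * (T + T) <= T.
  have : k * (T + T) = (k * 2) * T by ring.
  move=> ->; have := ler_wpM2r T0 k1; rewrite mul1r; exact.
lra.
Qed.
From mathcomp Require Import all_classical all_reals all_analysis.
Import numFieldNormedType.Exports.
Local Open Scope classical_set_scope.
Local Open Scope ring_scope.

Lemma lip_cont (R : realType) (S : R -> R) (L : R) : 0 <= L ->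
  (forall a b, `|S a - S b| <= L * `|a - b|) -> continuous S.
Proof.
move=> L0 HL x; apply/cvgrPdist_lt => e e0.
have L1 : 0 < L + 1 by rewrite ltr_wpDl.
near=> y.
apply: (le_lt_trans (HL x y)).
have : `|x - y| < e / (L + 1).
  near: y; apply/nbhs_ballP; exists (e / (L+1)); first by rewrite /= divr_gt0.
  by move=> z /=; rewrite /ball /=.
move=> hxy.
apply: (le_lt_trans (y := (L+1) * `|x - y|)).
  by rewrite ler_wpM2r // lerDl.
by rewrite mulrC -ltr_pdivlMr.
Unshelve. all: by end_near.
Qed.

Lemma fixpt (R : realType) (S : R -> R) (L : R) : 0 <= L ->
  (forall a b, `|S a - S b| <= L * `|a - b|) -> (forall t, 0 <= S t) ->
  (forall a b, a <= b -> S b <= S a) -> exists T, 0 <= T /\ S T = T.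
Proof.
move=> L0 HL Sp Sm.
have cS := @lip_cont R S L L0 HL.
have cf : continuous (fun t => t - S t).
  by move=> x; apply: continuousB => //; apply: cS.
have hc : {within `[0, S 0], continuous (fun t => t - S t)}.
  by apply: continuous_subspaceT.
have hv : Num.min ((fun t => t - S t) 0) ((fun t => t - S t) (S 0)) <= 0 <=
          Num.max ((fun t => t - S t) 0) ((fun t => t - S t) (S 0)).
  rewrite /= sub0r; apply/andP; split.
    by rewrite ge_min lerNl oppr0 Sp.
  by rewrite le_max subr_ge0 Sm ?orbT.
have [c cin fc] := @IVT R (fun t => t - S t) 0 (S 0) 0 (Sp 0) hc hv.
exists c; split; first by move: cin; rewrite in_itv /= => /andP[].
by apply/eqP; rewrite eq_sym -subr_eq0; apply/eqP.
Qed.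

Theorem mainTheorem2 (R : realType) (m n : nat) (p x y c : 'I_m -> R) :
  (n < m)%N ->
  (forall i, 0 < p i /\ p i <= 1) ->
  (forall i, 0 <= x i) ->
  (forall i, 0 <= c i /\ c i <= p i * y i) ->
  exists q : 'I_m -> R,
    (forall i, 0 <= q i <= 1) /\
    exists sigma : proc m,
      best_response n p c y q sigma /\
      forall tau : proc m, valid_proc n tau ->
        (1 / 2) * (1 - expR (- 1)) * principal_own p c x tau
          <= principal_delegated p c x q sigma.
Proof.
move=> _ hp hx hcy.
have [T [T0 hT]] := @fixpt R (fun T => maxsum (aT p x c T) [set: 'I_m] n) m%:R (ler0n _ _)
  (fun a b => S_lip n x c a b hp) (fun t => maxsum_ge0 _ _ _)
  (fun a b ab => S_mono n x c hp ab).
apply: (main_core hp hx hcy _ _ T0 hT).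
- apply: mulr_ge0; first by rewrite divr_ge0 ?ler01 ?ler0n.
  by rewrite subr_ge0 expR_le1 lerNl oppr0 ler01.
- have e1 : 0 <= expR (-1 : R) := expR_ge0 _.
  have : (1 / 2) * (1 - expR (- 1 : R)) * 2 = 1 - expR (-1) by field.
  move=> ->; lra.
Qed.
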